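(* Let $\mathcal{M},\mathcal{N}\in\mathbb{N}$, let $\phi:[0,+\infty)\to(0,1]$ be non-increasing, and let $\boldsymbol{L}\in\mathbb{R}^{\mathcal{M}\times\mathcal{N}}$ be $\phi$-multiplicatively badly approximable. Let $\varepsilon,T>0$, $\boldsymbol{Q}\in[1,+\infty)^{\mathcal{N}}$ and $Q:=(Q_1\cdots Q_{\mathcal{N}})^{1/\mathcal{N}}$. If $\varepsilon Q^{\mathcal{N}}/\phi(Q)<1$, then $\Lambda_{\boldsymbol{L}}\cap Z\subset C$.
   Context: $\|x\|$ is the distance from $x\in\mathbb{R}$ to the nearest integer, $L_i\boldsymbol{q}=\sum_jL_{ij}q_j$ for the rows $L_i$ of $\boldsymbol{L}$. $\boldsymbol{L}$ is $\phi$-multiplicatively badly approximable if for all $\boldsymbol{q}\in\mathbb{Z}^{\mathcal{N}}\setminus\{\boldsymbol{0}\}$, $\prod_{j}\max\{1,|q_j|\}\prod_{i}\|L_i\boldsymbol{q}\|\ge\phi\big((\prod_j\max\{1,|q_j|\})^{1/\mathcal{N}}\big)$. $\Lambda_{\boldsymbol{L}}:=\{(L_1\boldsymbol{q}+p_1,\dots,L_{\mathcal{M}}\boldsymbol{q}+p_{\mathcal{M}},\boldsymbol{q}):\boldsymbol{p}\in\mathbb{Z}^{\mathcal{M}},\boldsymbol{q}\in\mathbb{Z}^{\mathcal{N}}\}$; $H:=\{\boldsymbol{x}\in\mathbb{R}^{\mathcal{M}}:\prod_i|x_i|<\varepsilon,\ |x_i|\le T\ \forall i\}$; $Z:=H\times\prod_{j=1}^{\mathcal{N}}[-Q_j,Q_j]$;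 $C:=\{(\boldsymbol{x},\boldsymbol{y})\in\mathbb{R}^{\mathcal{M}}\times\mathbb{R}^{\mathcal{N}}:\boldsymbol{y}=\boldsymbol{0}\}$. *)

(* Defs.v *)
From HB Require Import structures.
From mathcomp Require Import all_boot all_order all_algebra.
From mathcomp Require Import all_classical all_reals all_analysis.
Set Implicit Arguments. Unset Strict Implicit. Unset Printing Implicit Defensive.
Import Order.TTheory GRing.Theory Num.Theory.
Local Open Scope ring_scope.
Local Open Scope classical_set_scope.

Section Defs.
Variable R : realType.

Definition distZ (x : R) : R :=
  Num.min (x - (Num.floor x)%:~R) ((Num.floor x + 1)%:~R - x).

Definition Lrow (M N : nat) (L : 'M[R]_(M, N)) (q : 'I_N -> int) (i : 'I_M) : R :=
  \sum_(j < N) L i j * (q j)%:~R.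

Definition mult_bad_approx (M N : nat) (phi : R -> R) (L : 'M[R]_(M, N)) : Prop :=
  forall q : 'I_N -> int, (exists j, q j != 0) ->
    let P := \prod_(j < N) Num.max 1 `|(q j)%:~R| in
    phi (P `^ (N%:R)^-1) <= P * \prod_(i < M) distZ (Lrow L q i).

Definition pt (M N : nat) := (('I_M -> R) * ('I_N -> R))%type.

Definition LambdaL (M N : nat) (L : 'M[R]_(M, N)) : set (pt M N) :=
  [set z | exists (p : 'I_M -> int) (q : 'I_N -> int),
      (forall i, z.1 i = Lrow L q i + (p i)%:~R) /\ (forall j, z.2 j = (q j)%:~R)].

Definition Hset (M : nat) (eps T : R) : set ('I_M -> R) :=
  [set x | \prod_(i < M) `|x i| < eps /\ forall i, `|x i| <= T].

Definition Zset (M N : nat) (eps T : R) (Qv : 'I_N -> R) : set (pt M N) :=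
  [set z | Hset eps T z.1 /\ forall j, `|z.2 j| <= Qv j].

Definition Cset (M N : nat) : set (pt M N) := [set z | forall j, z.2 j = 0].

End Defs.

(* Main.v *)
Require Import Defs.
From HB Require Import structures.
From mathcomp Require Import all_boot all_order all_algebra.
From mathcomp Require Import all_classical all_reals all_analysis.
From mathcomp Require Import lra zify.
Import Order.TTheory GRing.Theory Num.Theory.
Local Open Scope ring_scope.
Local Open Scope classical_set_scope.

Lemma distZ_ge0 (R : realType) (x : R) : 0 <= distZ x.
Proof.
rewrite /distZ le_min subr_ge0 floor_le /= subr_ge0.
by have /andP[_ /ltW] := floor_itv x.
Qed.

Lemma distZ_le (R : realType) (x : R) (n : int) : distZ x <= `|x + n%:~R|.
Proof.
rewrite /distZ ge_min.
have [h|h] := leP (- n) (Num.floor x).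
  apply/orP; left; apply: le_trans (ler_norm _).
  have : ((- n)%:~R : R) <= (Num.floor x)%:~R by rewrite ler_int.
  rewrite mulrNz; lra.
apply/orP; right; have := ler_norm (-(x + n%:~R)); rewrite normrN.
have h' : (Num.floor x + 1)%:~R <= ((- n)%:~R : R).
  by rewrite ler_int; lia.
move: h'; rewrite mulrNz intrD; lra.
Qed.

Theorem lemma2p5 (R : realType) (M N : nat) (phi : R -> R)
  (phi_range : forall x : R, 0 <= x -> 0 < phi x <= 1)
  (phi_noninc : forall x y : R, 0 <= x -> x <= y -> phi y <= phi x)
  (L : 'M[R]_(M, N)) (hL : mult_bad_approx phi L)
  (eps T : R) (heps : 0 < eps) (hT : 0 < T)
  (Qv : 'I_N -> R) (hQv : forall j, 1 <= Qv j) :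
  let Q := (\prod_(j < N) Qv j) `^ (N%:R)^-1 in
  eps * Q ^+ N / phi Q < 1 ->
  LambdaL L `&` Zset eps T Qv `<=` @Cset R M N.
Proof.
move=> Q hlt [x y] [[p [q [/= hx hy]]] [[hprod hT'] /= hQ]] j /=.
rewrite hy.
case: (boolP [exists j, q j != 0]) => [/existsP [j0 hj0]|/existsPn hn]; last first.
  by move: (hn j); rewrite negbK => /eqP ->.
exfalso.
have hN : (0 < N)%N by case: j0 {hj0} => /= m; lia.
set A := \prod_(j < N) Qv j.
have hA1 : 1 <= A.
  apply: (@le_trans _ _ (\prod_(j < N) (1:R))); first by rewrite big1.
  by apply: ler_prod => i _; rewrite ler01 hQv.
have hA0 : 0 < A by apply: lt_le_trans hA1.
have hQN : Q ^+ N = A.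
  rewrite /Q -powR_mulrn ?powR_ge0 // -powRrM mulVf ?powRr1 ?(ltW hA0) //.
  by rewrite pnatr_eq0 -lt0n.
set P := \prod_(j < N) Num.max 1 `|(q j)%:~R : R|.
have hP0 : 0 <= P by apply: prodr_ge0 => i _; rewrite le_max ler01.
have hPA : P <= A.
  apply: ler_prod => i _; rewrite le_max ler01 /= ge_max hQv /= -hy; exact: hQ.
set D := \prod_(i < M) distZ (Lrow L q i).
have hD0 : 0 <= D by apply: prodr_ge0 => i _; exact: distZ_ge0.
have hDe : D < eps.
  apply: le_lt_trans hprod; apply: ler_prod => i _.
  by rewrite distZ_ge0 /= hx distZ_le.
have hbad := hL q (ex_intro _ j0 hj0).
rewrite /= -/P -/D in hbad.
have hphi : phi Q <= phi (P `^ (N%:R)^-1).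
  apply: phi_noninc; first exact: powR_ge0.
  apply: ge0_ler_powR => //; rewrite ?invr_ge0 ?ler0n ?nnegrE //; exact: ltW.
have hQ0 : 0 < phi Q by have /andP[] := phi_range Q (powR_ge0 _ _).
have hlt2 : phi Q < eps * A.
  apply: le_lt_trans hphi _; apply: le_lt_trans hbad _.
  apply: le_lt_trans (_ : P * D <= A * D) _; first by apply: ler_wpM2r.
  by rewrite mulrC ltr_pM2r.
move: hlt; rewrite hQN ltr_pdivrMr // mul1r => h.
by move: (lt_trans h hlt2); rewrite ltxx.
Qed.
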